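(* Consider a ReLU network without biases with widths $n_0,\dots,n_L$ and two activation patterns $A_1=(A_1^1,\dots,A_1^{L-1})$, $A_2=(A_2^1,\dots,A_2^{L-1})$. Let $n_{\min}=\min_{\ell\in[L-1]}n_\ell$, $I_{\min}=\{\ell\in[L-1]:n_\ell=n_{\min}\}$, $\ell^+_{\min}=\max I_{\min}$, $\ell^-_{\min}=\min I_{\min}$. Let $r_i$ be the rank of $M_{A_i}(\theta)$ for generic $\theta$, and let $t=r_a+r_b$. Then $J^{\mathbf{A}}$ contains: 1. all $(r_1+1)$-minors of $M_1$; 2. all $(r_2+1)$-minors of $M_2$; 3a. all $(n_{\min}+1)$-minors of $[M_1\mid M_2]$, provided $A_1^\ell=A_2^\ell$ for all $\ell$ with $L-1\ge\ell>\ell^+_{\min}$; 3b. all $(n_{\min}+1)$-minors of $[M_1^\top\mid M_2^\top]$, provided $A_1^\ell=A_2^\ell$ for all $\ell$ with $1\le\ell<\ell^-_{\min}$; 4. all $(t+1)$-minors of $M_1-M_2$.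
   Context: Parameters are $\theta=(W^{(1)},\dots,W^{(L)})$, $W^{(\ell)}=(w^{(\ell)}_{ij})\in\mathbb{R}^{n_\ell\times n_{\ell-1}}$, and $M_A(\theta)=W^{(L)}\operatorname{diag}(A^{L-1})W^{(L-1)}\cdots\operatorname{diag}(A^1)W^{(1)}$. A path is $p=(p_1,\dots,p_{L-1})$ with $p_\ell\in[n_\ell]$; it is $A$-active if $A^\ell_{p_\ell}=1$ for all $\ell$. Let $R_1$, $R_2$ be the sets of $A_1$-active and $A_2$-active paths and $S=R_1\cap R_2$. For a set of paths $P$, the path network matrix is $M^P(\theta)\in\mathbb{R}^{n_L\times n_0}$ with $M^P(\theta)_{ij}=\sum_{p\in P}w^{(1)}_{p_1j}w^{(2)}_{p_2p_1}\cdots w^{(L-1)}_{p_{L-1}p_{L-2}}w^{(L)}_{ip_{L-1}}$, and the rank of the path network is the rank of $M^P(\theta)$ for generic $\theta$. $r_a$ and $r_b$ are the ranks of the path networks of $R_1\setminus S$ and $R_2\setminus S$. $J^{\mathbf{A}}\subseteq\mathbb{C}[m^{(1)}_{ij},m^{(2)}_{ij}]$ is the vanishing ideal of the Zariski closure in $\mathbb{C}^{n_L\times n_0}\times\mathbb{C}^{n_L\times n_0}$ of $\{(M_{A_1}(\theta),M_{A_2}(\theta)):\theta\}$, with coordinate matrices $M_1=(m^{(1)}_{ij})$, $M_2=(m^{(2)}_{ij})$. *)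

(* Defs.v *)
From HB Require Import structures.
From mathcomp Require Import all_boot all_order all_algebra.
From mathcomp Require Import complex.
From mathcomp Require Import Rstruct.
From mathcomp Require Import mpoly.
Set Implicit Arguments. Unset Strict Implicit. Unset Printing Implicit Defensive.
Import GRing.Theory.
Local Open Scope ring_scope.

Notation RR := Rdefinitions.R.
Definition CC := complex RR.
Definition toC (x : RR) : CC := Complex x 0.

Section Network.
(* widths n_0, n_1, ..., n_L  (only n 0 .. n L matter); L = Lp.+2 >= 2 *)
Variable n : nat -> nat.

(* Parameters theta: W k is the weight matrix W^{(k+1)} in R^{n_{k+1} x n_k}.
   Only W 0, ..., W (L-1) are used. *)
Definition params := forall k : nat, 'M[RR]_(n k.+1, n k).

(* An activation pattern: A l i = A^l_i (only l = 1 .. L-1 are used). *)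
Definition actpat := forall l : nat, 'I_(n l) -> bool.

Definition diagA (A : actpat) (l : nat) : 'M[RR]_(n l) :=
  diag_mx (\row_i ((A l i)%:R : RR)).

Fixpoint netM (A : actpat) (W : params) (k : nat) : 'M[RR]_(n k.+1, n 0%N) :=
  match k with
  | 0 => W 0%N
  | k'.+1 => W k'.+1 *m diagA A k'.+1 *m netM A W k'
  end.

Definition MA (Lp : nat) (A : actpat) (W : params) : 'M[RR]_(n Lp.+2, n 0%N) :=
  netM A W Lp.+1.

(* Paths p = (p_1, ..., p_{L-1}); p k is p_{k+1} in [n_{k+1}] *)
Definition npath (Lp : nat) := {dffun forall k : 'I_Lp.+1, 'I_(n k.+1)}.

Definition pnat (Lp : nat) (p : npath Lp) (l : nat) : nat :=
  if insub l is Some l' then val (p l') else 0.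

(* entry of a matrix at natural-number indices (0 outside the range) *)
Definition ent (r c : nat) (M : 'M[RR]_(r, c)) (i j : nat) : RR :=
  if insub i is Some i' then if insub j is Some j' then M i' j' else 0 else 0.

Definition active (Lp : nat) (A : actpat) (p : npath Lp) : bool :=
  [forall k : 'I_Lp.+1, A k.+1 (p k)].

(* w^{(1)}_{p_1 j} w^{(2)}_{p_2 p_1} ... w^{(L-1)}_{p_{L-1} p_{L-2}} w^{(L)}_{i p_{L-1}} *)
Definition path_weight (Lp : nat) (W : params) (p : npath Lp)
    (i : 'I_(n Lp.+2)) (j : 'I_(n 0%N)) : RR :=
  W 0%N (p ord0) j
  * (\prod_(k < Lp) ent (W k.+1) (pnat p k.+1) (pnat p k))
  * W Lp.+1 i (p ord_max).

Definition pathM (Lp : nat) (P : pred (npath Lp)) (W : params)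
    : 'M[RR]_(n Lp.+2, n 0%N) :=
  \matrix_(i, j) \sum_(p | P p) path_weight W p i j.

End Network.

(* "rank of f theta for generic theta": the maximal rank, attained on a
   nonempty Zariski-open (hence dense) set of parameters. *)
Definition is_generic_rank (T : Type) (f : T -> nat) (r : nat) : Prop :=
  (exists t, f t = r) /\ (forall t, (f t <= r)%N).

Section Ideal.
Variables m c : nat.
(* polynomial ring C[m^(1)_{ij}, m^(2)_{ij}], i in [m], j in [c] *)
Definition nvars := (m * c + m * c)%N.
Definition Poly := {mpoly CC[nvars]}.

Definition Mvar1 : 'M[Poly]_(m, c) :=
  \matrix_(i, j) 'X_(lshift (m * c) (mxvec_index i j)).
Definition Mvar2 : 'M[Poly]_(m, c) :=
  \matrix_(i, j) 'X_(rshift (m * c) (mxvec_index i j)).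

Definition pt (M1 M2 : 'M[CC]_(m, c)) : 'I_nvars -> CC :=
  fun v => match split v with
           | inl a => mxvec M1 0 a
           | inr b => mxvec M2 0 b
           end.

Definition zariski_closure (S : ('I_nvars -> CC) -> Prop) (x : 'I_nvars -> CC) : Prop :=
  forall g : Poly, (forall s, S s -> g.@[s] = 0) -> g.@[x] = 0.

Definition vanishing_ideal (V : ('I_nvars -> CC) -> Prop) (f : Poly) : Prop :=
  forall x, V x -> f.@[x] = 0.
End Ideal.

Definition JA (n : nat -> nat) (Lp : nat) (A1 A2 : actpat n) : Poly (n Lp.+2) (n 0%N) -> Prop :=
  vanishing_ideal (zariski_closure
    (fun x => exists W : params n,
        x = pt (map_mx toC (MA Lp A1 W)) (map_mx toC (MA Lp A2 W)))).

Definition minor (R : comNzRingType) (a b r : nat) (X : 'M[R]_(a, b))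
    (f : 'I_r -> 'I_a) (g : 'I_r -> 'I_b) : R :=
  \det (\matrix_(i, j) X (f i) (g j)).

(* n_min and the extreme indices of I_min, for layers 1 .. L-1 = 1 .. Lp.+1 *)
Definition nmin (n : nat -> nat) (Lp : nat) : nat :=
  \big[minn/n 1]_(l < Lp.+1) n l.+1.
Definition lmin_plus (n : nat -> nat) (Lp : nat) : nat :=
  \max_(l < Lp.+1 | n l.+1 == nmin n Lp) l.+1.
Definition lmin_minus (n : nat -> nat) (Lp : nat) : nat :=
  \big[minn/Lp.+1]_(l < Lp.+1 | n l.+1 == nmin n Lp) l.+1.

(* Main.v *)
Require Import Defs.
From HB Require Import structures.
From mathcomp Require Import all_boot all_order all_algebra.
From mathcomp Require Import complex.
From mathcomp Require Import Rstruct.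
From mathcomp Require Import mpoly.
From mathcomp Require Import ring.
Import GRing.Theory.
Local Open Scope ring_scope.
Set Implicit Arguments. Unset Strict Implicit. Unset Printing Implicit Defensive.
Section Net.
Variable n : nat -> nat.

Lemma diagA_eq (A1 A2 : actpat n) l :
  (forall i, A1 l i = A2 l i) -> diagA A1 l = diagA A2 l.
Proof. by move=> H; rewrite /diagA; congr diag_mx; apply/rowP => i; rewrite !mxE H. Qed.

Lemma netM_row_rank (A1 A2 : actpat n) (W : params n) l k :
  (1 <= l <= k)%N -> (forall j, (l < j <= k)%N -> forall i, A1 j i = A2 j i) ->
  (\rank (row_mx (netM A1 W k) (netM A2 W k)) <= n l)%N.
Proof.
elim: k => [|k IH]; first by case/andP=> /leq_trans H /H.
move=> /andP [H1 H2] HA /=.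
case: (eqVneq l k.+1) => [El|Nl].
  rewrite -!mulmxA -mul_mx_row El.
  by apply: leq_trans (mxrankM_maxl _ _) (rank_leq_col _).
have Hl : (l <= k)%N by rewrite -ltnS ltn_neqAle Nl H2.
rewrite (diagA_eq (A1 := A1) (A2 := A2)); last by apply: HA; rewrite ltnS Hl /=.
rewrite -!mulmxA -!mul_mx_row.
apply: leq_trans (mxrankM_maxr _ _) _.
apply: leq_trans (mxrankM_maxr _ _) _.
apply: IH; first by rewrite H1 Hl.
by move=> j /andP [Hj1 Hj2]; apply: HA; rewrite Hj1 ltnW.
Qed.

Lemma netM_eq (A1 A2 : actpat n) (W : params n) m :
  (forall j, (1 <= j <= m)%N -> forall i, A1 j i = A2 j i) ->
  netM A1 W m = netM A2 W m.
Proof.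
elim: m => [|m IH] H //=.
rewrite IH; last by move=> j /andP [a b]; apply: H; rewrite a ltnW.
rewrite (@diagA_eq A1 A2 m.+1) // => i.
by apply: H; rewrite /= leqnn.
Qed.

Lemma netM_factor (A : actpat n) (W : params n) m d :
  exists X : 'M_(n (d + m).+1, n m.+1), netM A W (d + m) = X *m netM A W m.
Proof.
elim: d => [|d [X HX]].
  by exists 1%:M; rewrite mul1mx.
rewrite addSn; exists (W (d + m).+1 *m diagA A (d + m).+1 *m X) => /=.
by rewrite HX !mulmxA.
Qed.

Lemma netM_col_rank (A1 A2 : actpat n) (W : params n) l k :
  (1 <= l <= k)%N -> (forall j, (1 <= j < l)%N -> forall i, A1 j i = A2 j i) ->
  (\rank (col_mx (netM A1 W k) (netM A2 W k)) <= n l)%N.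
Proof.
case: l => [//|m] /andP [_ Hmk] HA.
have Hmk' : (m <= k)%N by apply: ltnW.
rewrite -(subnK Hmk').
have [X1 ->] := netM_factor A1 W m (k - m).
have [X2 ->] := netM_factor A2 W m (k - m).
rewrite (@netM_eq A2 A1 W m); last by move=> j Hj i; rewrite HA.
rewrite -mul_col_mx.
by apply: leq_trans (mxrankM_maxr _ _) (rank_leq_row _).
Qed.
End Net.
Section Paths.
Variable n : nat -> nat.

Lemma ent_val r c (M : 'M[RR]_(r, c)) (x : 'I_r) (y : 'I_c) :
  ent M (val x) (val y) = M x y.
Proof. by rewrite /ent !valK. Qed.

Lemma pnat_val L (p : npath n L) l (H : (l < L.+1)%N) :
  Defs.pnat p l = val (p (Ordinal H)).
Proof. by rewrite /Defs.pnat insubT. Qed.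

Definition restr L (p : npath n L.+1) : npath n L :=
  [ffun k : 'I_L.+1 => p (widen_ord (leqnSn L.+1) k)].

Lemma card_npath L : #|npath n L| = (\prod_(k < L.+1) n k.+1)%N.
Proof.
rewrite card_dep_ffun foldrE big_map -big_enum /=.
by apply: eq_bigr => k _; rewrite card_ord.
Qed.

Lemma restrE L (p : npath n L.+1) (k : 'I_L.+1) :
  restr p k = p (widen_ord (leqnSn L.+1) k).
Proof. by rewrite ffunE. Qed.

Lemma active_restr L (A : actpat n) (p : npath n L.+1) :
  active A p = active A (restr p) && A L.+2 (p ord_max).
Proof.
apply/forallP/andP.
  move=> Hp; split; last exact: (Hp ord_max).
  by apply/forallP => k; rewrite restrE; exact: (Hp (widen_ord _ k)).
move=> [/forallP Hq Ha] k.
case: (ltnP k L.+1) => H.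
  have -> : k = widen_ord (leqnSn L.+1) (Ordinal H) by apply: val_inj.
  by have := Hq (Ordinal H); rewrite restrE.
have -> : k = ord_max by apply: val_inj => /=; apply/eqP; rewrite eqn_leq H -ltnS ltn_ord.
exact: Ha.
Qed.

Lemma restr_inj L : injective (fun p : npath n L.+1 => (restr p, p ord_max)).
Proof.
move=> p1 p2 [Er Em]; apply/ffunP => k.
case: (ltnP k L.+1) => H.
  have -> : k = widen_ord (leqnSn L.+1) (Ordinal H) by apply: val_inj.
  by have := congr1 (fun q : npath n L => q (Ordinal H)) Er; rewrite /= !restrE.
have -> : k = ord_max by apply: val_inj => /=; apply/eqP; rewrite eqn_leq H -ltnS ltn_ord.
exact: Em.
Qed.

Lemma restr_bij L : bijective (fun p : npath n L.+1 => (restr p, p ord_max)).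
Proof.
apply: inj_card_bij; first exact: restr_inj.
rewrite card_prod !card_npath card_ord [X in (_ <= X)%N]big_ord_recr /=. done.
Qed.


Lemma pval_eq L (p : npath n L) (o1 o2 : 'I_L.+1) :
  val o1 = val o2 -> val (p o1) = val (p o2).
Proof. by move=> /val_inj ->. Qed.

Lemma pnat_restr L (p : npath n L.+1) l : (l <= L)%N ->
  Defs.pnat (restr p) l = Defs.pnat p l.
Proof.
move=> H.
have H1 : (l < L.+1)%N by [].
have H2 : (l < L.+2)%N by apply: leq_trans H1 _.
rewrite (pnat_val (restr p) H1) (pnat_val p H2) restrE.
by apply: pval_eq.
Qed.

Lemma pw_restr L (W : params n) (p : npath n L.+1) i j :
  path_weight W p i j =
  path_weight W (restr p) (p ord_max) j * W L.+2 i (p ord_max).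
Proof.
rewrite /path_weight.
have E0 : restr p ord0 = p ord0 :> 'I_(n 1).
  apply: val_inj; rewrite restrE.
  by apply: pval_eq.
rewrite E0 big_ord_recr /=.
have EP : \prod_(k < L) ent (W k.+1) (Defs.pnat p (widen_ord (leqnSn L) k).+1)
                                (Defs.pnat p (widen_ord (leqnSn L) k))
        = \prod_(k < L) ent (W k.+1) (Defs.pnat (restr p) k.+1) (Defs.pnat (restr p) k).
  apply: eq_bigr => k _ /=.
  by rewrite !pnat_restr // ltnW.
have HL : (L < L.+2)%N by apply: ltnW.
have EM : ent (W L.+1) (Defs.pnat p L.+1) (Defs.pnat p L)
          = W L.+1 (p ord_max) (restr p ord_max).
  rewrite -ent_val (pnat_val p (ltnSn L.+1)) (pnat_val p HL) restrE.
  by congr (_ _ _); apply: pval_eq.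
rewrite EP EM.
by rewrite -!mulrA.
Qed.


Lemma netM_path L (A : actpat n) (W : params n) :
  netM A W L.+1 = pathM (fun p : npath n L => active A p) W.
Proof.
elim: L => [|L IH].
  apply/matrixP => i j; rewrite /= !mxE.
  pose G (a : 'I_(n 1)) := if A 1%N a then W 0%N a j * W 1%N i a else 0.
  transitivity (\sum_(a : 'I_(n 1)) G a).
    apply: eq_bigr => a _; rewrite mul_mx_diag !mxE /G.
    by case: (A 1%N a) => /=; ring.
  have Hbij : bijective (fun p : npath n 0 => p ord0).
    apply: inj_card_bij.
      move=> p1 p2 E; apply/ffunP => k.
      by rewrite (_ : k = ord0) //; apply: val_inj; case: k => -[].
    by rewrite card_npath card_ord big_ord1.
  rewrite (reindex (fun p : npath n 0 => p ord0)) /=; last exact: onW_bij.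
  rewrite [RHS]big_mkcond /=.
  apply: eq_bigr => p _; rewrite /G.
  have -> : active A p = A 1%N (p ord0).
    apply/forallP/idP => [H|H k]; first exact: (H ord0).
    by rewrite (_ : k = ord0) //; apply: val_inj; case: k => -[].
  case: (A 1%N (p ord0)) => //.
  rewrite /path_weight big_ord0 mulr1.
  have -> : p ord_max = p ord0 :> 'I_(n 1) by apply: val_inj; apply: pval_eq.
  by [].
apply/matrixP => i j.
have -> : netM A W L.+2 = W L.+2 *m diagA A L.+2 *m netM A W L.+1 by [].
rewrite IH !mxE.
pose G (x : npath n L * 'I_(n L.+2)) :=
  if active A x.1 && A L.+2 x.2 then path_weight W x.1 x.2 j * W L.+2 i x.2 else 0.
transitivity (\sum_(a : 'I_(n L.+2)) \sum_(q : npath n L) G (q, a)).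
  apply: eq_bigr => a _.
  rewrite mul_mx_diag !mxE big_distrr /= (big_mkcond (fun q => active A q)) /=.
  apply: eq_bigr => q _; rewrite /G /=.
  case: (active A q); case: (A L.+2 a) => /=; rewrite ?mxE /=; ring.
rewrite exchange_big pair_big /=.
rewrite (reindex (fun p : npath n L.+1 => (restr p, p ord_max))) /=; last first.
  by apply: onW_bij; apply: restr_bij.
rewrite [RHS]big_mkcond /=.
apply: eq_bigr => p _; rewrite /G /= -active_restr.
by case: (active A p); rewrite // -pw_restr.
Qed.

End Paths.
Lemma bigminn_le (I : finType) (P : pred I) (F : I -> nat) s i0 :
  P i0 -> (\big[minn/s]_(i | P i) F i <= F i0)%N.
Proof.
move=> Hi0; have : i0 \in index_enum I := mem_index_enum i0.
elim: (index_enum I) => // x r IH.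
rewrite inE big_cons => /orP [/eqP <-|Hr].
  by rewrite Hi0 geq_minl.
case: (P x); last exact: IH.
by rewrite geq_min IH ?orbT.
Qed.

Section Nmin.
Variables (n : nat -> nat) (Lp : nat).

Lemma nmin_wit : exists l : 'I_Lp.+1, n l.+1 = nmin n Lp.
Proof.
rewrite /nmin; apply: (big_ind (fun x => exists l : 'I_Lp.+1, n l.+1 = x)).
- by exists ord0.
- move=> x y [l1 E1] [l2 E2]; rewrite /minn; case: ltnP => _.
    by exists l1. by exists l2.
- by move=> l _; exists l.
Qed.

Lemma lmin_plus_spec : exists l : 'I_Lp.+1, lmin_plus n Lp = l.+1 /\ n l.+1 = nmin n Lp.
Proof.
have [l0 E0] := nmin_wit.
have Hge : (l0.+1 <= lmin_plus n Lp)%N.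
  rewrite /lmin_plus.
  apply: (@leq_bigmax_cond _ (fun l : 'I_Lp.+1 => n l.+1 == nmin n Lp) (fun l : 'I_Lp.+1 => l.+1) l0).
  by apply/eqP.
have : lmin_plus n Lp = 0%N \/ exists l : 'I_Lp.+1, lmin_plus n Lp = l.+1 /\ n l.+1 = nmin n Lp.
  rewrite /lmin_plus.
  apply: (big_ind (fun x => x = 0%N \/ exists l : 'I_Lp.+1, x = l.+1 /\ n l.+1 = nmin n Lp)).
  - by left.
  - move=> x y Hx Hy; rewrite /maxn; by case: ltnP.
  - by move=> l /eqP Hl; right; exists l.
by case=> // E; rewrite E in Hge.
Qed.

Lemma lmin_minus_spec : exists l : 'I_Lp.+1, lmin_minus n Lp = l.+1 /\ n l.+1 = nmin n Lp.
Proof.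
have [l0 E0] := nmin_wit.
have Hle : (lmin_minus n Lp <= l0.+1)%N.
  rewrite /lmin_minus.
  apply: (@bigminn_le _ (fun l : 'I_Lp.+1 => n l.+1 == nmin n Lp) (fun l : 'I_Lp.+1 => l.+1) _ l0).
  by apply/eqP.
have : lmin_minus n Lp = Lp.+1 \/ exists l : 'I_Lp.+1, lmin_minus n Lp = l.+1 /\ n l.+1 = nmin n Lp.
  rewrite /lmin_minus.
  apply: (big_ind (fun x => x = Lp.+1 \/ exists l : 'I_Lp.+1, x = l.+1 /\ n l.+1 = nmin n Lp)).
  - by left.
  - move=> x y Hx Hy; rewrite /minn; by case: ltnP.
  - by move=> l /eqP Hl; right; exists l.
case=> // E; exists l0; split => //.
rewrite E in Hle *; apply/eqP; rewrite eqn_leq Hle /=.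
by have := ltn_ord l0.
Qed.
End Nmin.

Lemma J_of_vanish n Lp (A1 A2 : actpat n) (f : Defs.Poly (n Lp.+2) (n 0%N)) :
  (forall W : params n,
     f.@[pt (map_mx toC (MA Lp A1 W)) (map_mx toC (MA Lp A2 W))] = 0) ->
  @JA n Lp A1 A2 f.
Proof. by move=> H x Hx; apply: Hx => s [W ->]; exact: H. Qed.

Lemma minor_eval m c a b r (X : 'M[Defs.Poly m c]_(a, b)) (f : 'I_r -> 'I_a) g v :
  (minor X f g).@[v] = minor (map_mx (meval v) X) f g.
Proof.
rewrite /minor -(det_map_mx (meval v)); congr (\det _).
by apply/matrixP => i j; rewrite !mxE.
Qed.

Lemma eval_Mvar1 m c (M1 M2 : 'M[CC]_(m, c)) :
  map_mx (meval (pt M1 M2)) (Mvar1 m c) = M1.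
Proof.
apply/matrixP => i j; rewrite !mxE mevalXU /pt.
by rewrite (unsplitK (inl _ : 'I_(m * c) + 'I_(m * c))) mxvecE.
Qed.

Lemma eval_Mvar2 m c (M1 M2 : 'M[CC]_(m, c)) :
  map_mx (meval (pt M1 M2)) (Mvar2 m c) = M2.
Proof.
apply/matrixP => i j; rewrite !mxE mevalXU /pt.
by rewrite (unsplitK (inr _ : 'I_(m * c) + 'I_(m * c))) mxvecE.
Qed.

Lemma minor_toC a b r (X : 'M[RR]_(a, b)) (f : 'I_r -> 'I_a) g :
  minor (map_mx toC X) f g = toC (minor X f g).
Proof.
rewrite /minor.
transitivity (real_complex RR (\det (\matrix_(i, j) X (f i) (g j)))); last by [].
rewrite -det_map_mx; congr (\det _).
by apply/matrixP => i j; rewrite !mxE.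
Qed.

Lemma minor_rank a b r (X : 'M[RR]_(a, b)) (f : 'I_r.+1 -> 'I_a) g :
  (\rank X <= r)%N -> minor X f g = 0.
Proof.
move=> H; rewrite /minor.
set S := \matrix_(i, j) X (f i) (g j).
have HS : (\rank S <= r)%N.
  have -> : S = rowsub f 1%:M *m X *m colsub g 1%:M.
    by rewrite mulmx_colsub mulmx1 -rowsubE; apply/matrixP => i j; rewrite !mxE.
  by apply: leq_trans (mxrankM_maxl _ _) _; apply: leq_trans (mxrankM_maxr _ _) H.
apply/eqP; apply: contraTT HS => Hd.
rewrite -ltnNge.
have : S \in unitmx by rewrite unitmxE unitfE.
by rewrite -row_free_unit /row_free => /eqP ->.
Qed.

Lemma MA_diff_rank n Lp (A1 A2 : actpat n) (W : params n) :
  (\rank (MA Lp A1 W - MA Lp A2 W)%R <=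
   \rank (pathM (fun p : npath n Lp => active A1 p && ~~ active A2 p) W)
   + \rank (pathM (fun p : npath n Lp => active A2 p && ~~ active A1 p) W))%N.
Proof.
have -> : MA Lp A1 W - MA Lp A2 W =
   pathM (fun p : npath n Lp => active A1 p && ~~ active A2 p) W
   - pathM (fun p : npath n Lp => active A2 p && ~~ active A1 p) W.
  rewrite /MA !netM_path; apply/matrixP => i j; rewrite !mxE.
  rewrite (bigID (fun p => active A2 p)) [X in _ - X](bigID (fun p => active A1 p)) /=.
  rewrite [X in _ - (X + _)](eq_bigl (fun p => active A1 p && active A2 p)); last first.
    by move=> p; rewrite andbC.
  by ring.
by apply: leq_trans (mxrank_add _ _) _; rewrite mxrank_opp.
Qed.

Lemma toC_mxB a b (X Y : 'M[RR]_(a, b)) :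
  map_mx toC (X - Y) = map_mx toC X - map_mx toC Y.
Proof. exact: (map_mxB (real_complex RR) X Y). Qed.

Unset Implicit Arguments.
(* Depth L = Lp.+2 (so that [L-1] is nonempty); layers 1 .. L-1 = 1 .. Lp.+1. *)
Theorem theorem6p4 (Lp : nat) (n : nat -> nat) (A1 A2 : actpat n)
    (r1 r2 ra rb : nat) :
  is_generic_rank (fun W : params n => \rank (MA Lp A1 W)) r1 ->
  is_generic_rank (fun W : params n => \rank (MA Lp A2 W)) r2 ->
  (* r_a : rank of the path network of R_1 \ S (A1-active, not A2-active) *)
  is_generic_rank
    (fun W : params n => \rank (pathM (fun p : npath n Lp => active A1 p && ~~ active A2 p) W)) ra ->
  (* r_b : rank of the path network of R_2 \ S *)
  is_generic_rank
    (fun W : params n => \rank (pathM (fun p : npath n Lp => active A2 p && ~~ active A1 p) W)) rb ->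
  let J := @JA n Lp A1 A2 in
  let M1 := Mvar1 (n Lp.+2) (n 0%N) in
  let M2 := Mvar2 (n Lp.+2) (n 0%N) in
  (* 1. *)
  (forall (f : 'I_r1.+1 -> 'I_(n Lp.+2)) (g : 'I_r1.+1 -> 'I_(n 0%N)),
      J (minor M1 f g)) /\
  (* 2. *)
  (forall (f : 'I_r2.+1 -> 'I_(n Lp.+2)) (g : 'I_r2.+1 -> 'I_(n 0%N)),
      J (minor M2 f g)) /\
  (* 3a. *)
  ((forall l : nat, (lmin_plus n Lp < l <= Lp.+1)%N ->
       forall i : 'I_(n l), A1 l i = A2 l i) ->
   forall (f : 'I_(nmin n Lp).+1 -> 'I_(n Lp.+2))
          (g : 'I_(nmin n Lp).+1 -> 'I_(n 0%N + n 0%N)),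
      J (minor (row_mx M1 M2) f g)) /\
  (* 3b. *)
  ((forall l : nat, (1 <= l < lmin_minus n Lp)%N ->
       forall i : 'I_(n l), A1 l i = A2 l i) ->
   forall (f : 'I_(nmin n Lp).+1 -> 'I_(n 0%N))
          (g : 'I_(nmin n Lp).+1 -> 'I_(n Lp.+2 + n Lp.+2)),
      J (minor (row_mx M1^T M2^T) f g)) /\
  (* 4. *)
  (forall (f : 'I_(ra + rb).+1 -> 'I_(n Lp.+2)) (g : 'I_(ra + rb).+1 -> 'I_(n 0%N)),
      J (minor (M1 - M2) f g)).
Proof.
Proof.
move=> [_ H1] [_ H2] [_ Ha] [_ Hb] J M1 M2.
have EV1 : forall W : params n,
  map_mx (meval (pt (map_mx toC (MA Lp A1 W)) (map_mx toC (MA Lp A2 W)))) M1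
  = map_mx toC (MA Lp A1 W) by move=> W; exact: eval_Mvar1.
have EV2 : forall W : params n,
  map_mx (meval (pt (map_mx toC (MA Lp A1 W)) (map_mx toC (MA Lp A2 W)))) M2
  = map_mx toC (MA Lp A2 W) by move=> W; exact: eval_Mvar2.
split; [|split; [|split; [|split]]].
- move=> f g; apply: J_of_vanish => W.
  by rewrite minor_eval EV1 minor_toC minor_rank.
- move=> f g; apply: J_of_vanish => W.
  by rewrite minor_eval EV2 minor_toC minor_rank.
- move=> HA f g; apply: J_of_vanish => W.
  rewrite minor_eval map_row_mx EV1 EV2 -map_row_mx minor_toC minor_rank //.
  have [l0 [El Hn]] := lmin_plus_spec n Lp.
  rewrite /MA -Hn; apply: netM_row_rank.
    exact: (ltn_ord l0).
  by move=> j Hj; apply: HA; rewrite El.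
- move=> HA f g; apply: J_of_vanish => W.
  rewrite minor_eval map_row_mx -!map_trmx EV1 EV2 !map_trmx -map_row_mx minor_toC minor_rank //.
  have [l0 [El Hn]] := lmin_minus_spec n Lp.
  rewrite -tr_col_mx mxrank_tr /MA -Hn; apply: netM_col_rank.
    exact: (ltn_ord l0).
  by move=> j Hj; apply: HA; rewrite El.
- move=> f g; apply: J_of_vanish => W.
  rewrite minor_eval map_mxB EV1 EV2 -toC_mxB minor_toC minor_rank //.
  apply: leq_trans (MA_diff_rank _ _ _ _) _.
  by apply: leq_add.
Qed.
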